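(* There is a universal constant $c>0$ such that the following holds. Let $\gamma \in (0, 1/6]$, let $n \geq 2$ be an integer, and let $\eta \geq \eta_1 := \max\{n, \frac{32}{\gamma^2}\log(3/\gamma)\}$. Then there exist a dimension $d$ and a dataset $x_1,\dots,x_n\in\mathbb{R}^d$ with $\|x_i\| \le 1$ for all $i$, linearly separable with maximum margin exactly $\gamma$, such that gradient descent with step size $\eta$ on this dataset has transition time $\tau := \min\{t \geq 0 : F(w_t) \leq 1/(8\eta)\}$ satisfying $\tau \geq c\left(\frac{n}{\gamma} + \frac{1}{\gamma^2}\right)$.
   Context: All labels are $+1$. Linear separability: some $w$ has $\langle w,x_i\rangle>0$ for all $i$. Maximum margin: $\max_{\|w\|=1}\min_i\langle w,x_i\rangle$. Loss $F(w) = \frac{1}{n}\sum_{i=1}^n \log(1+\exp(-\langle w, x_i\rangle))$. Gradient descent with constant step size $\eta$: $w_0 = 0$, $w_{t+1} = w_t - \eta\nabla F(w_t)$. *)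

(* Defs.v *)
From Stdlib Require Import Reals.
From HB Require Import structures.
From mathcomp Require Import all_boot all_order all_algebra.
From mathcomp Require Import Rstruct.
Set Implicit Arguments. Unset Strict Implicit. Unset Printing Implicit Defensive.
Import Order.TTheory GRing.Theory Num.Theory.
Local Open Scope ring_scope.

Definition dot (d : nat) (u v : 'rV[R]_d) : R := \sum_(k < d) u 0 k * v 0 k.
Definition vnorm (d : nat) (u : 'rV[R]_d) : R := Num.sqrt (dot u u).

(* Logistic loss F(w) = 1/n sum_i log(1 + exp(-<w,x_i>)) (all labels +1). *)
Definition loss (n d : nat) (x : 'I_n -> 'rV[R]_d) (w : 'rV[R]_d) : R :=
  n%:R^-1 * \sum_(i < n) ln (1 + exp (- dot w (x i))).

Definition grad (n d : nat) (x : 'I_n -> 'rV[R]_d) (w : 'rV[R]_d) : 'rV[R]_d :=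
  n%:R^-1 *: \sum_(i < n) (- (1 + exp (dot w (x i)))^-1) *: x i.

Fixpoint gd (n d : nat) (x : 'I_n -> 'rV[R]_d) (eta : R) (t : nat) : 'rV[R]_d :=
  match t with
  | O => 0
  | S t' => gd x eta t' - eta *: grad x (gd x eta t')
  end.

Definition lin_separable (n d : nat) (x : 'I_n -> 'rV[R]_d) : Prop :=
  exists w : 'rV[R]_d, forall i, 0 < dot w (x i).

(* max_{||w||=1} min_i <w,x_i> = g : the value g is attained by some unit w,
   and no unit w does better. *)
Definition max_margin_is (n d : nat) (x : 'I_n -> 'rV[R]_d) (g : R) : Prop :=
  (exists w : 'rV[R]_d, vnorm w = 1 /\ forall i, g <= dot w (x i)) /\
  (forall w : 'rV[R]_d, vnorm w = 1 -> exists i, dot w (x i) <= g).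

(* Main.v *)
Require Import Defs.
From Stdlib Require Import Reals.
From HB Require Import structures.
From mathcomp Require Import all_boot all_order all_algebra.
From mathcomp Require Import Rstruct.
From mathcomp.algebra_tactics Require Import ring lra.
Import Order.TTheory GRing.Theory Num.Theory.
Local Open Scope ring_scope.
Set Implicit Arguments. Unset Strict Implicit. Unset Printing Implicit Defensive.

Ltac nrm := rewrite ?RplusE ?RoppE ?RminusE ?RmultE ?R1E ?R0E ?RinvE ?RdivE.

Lemma exp_gt0 (x : R) : 0 < exp x.
Proof. apply/RltP; exact: exp_pos. Qed.
Lemma expD (x y : R) : exp (x + y) = exp x * exp y.
Proof. by rewrite expRD. Qed.
Lemma exp_ge1 (x : R) : 1 + x <= exp x.
Proof. apply/RleP; exact: exp_ineq1_le. Qed.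
Lemma expN (x : R) : exp (- x) = (exp x)^-1.
Proof. by rewrite exp_Ropp. Qed.
Lemma exp_le (x y : R) : x <= y -> exp x <= exp y.
Proof.
move=> /RleP h; apply/RleP; case: (Rle_lt_or_eq_dec _ _ h) => [h'|->].
  by left; apply: exp_increasing.
by right.
Qed.
Lemma exp1_le3 : exp 1 <= 3.
Proof. apply/RleP. have := exp_le_3. by []. Qed.
Lemma ln_le (x y : R) : 0 < x -> x <= y -> ln x <= ln y.
Proof.
move=> /RltP hx /RleP h; apply/RleP; case: (Rle_lt_or_eq_dec _ _ h) => [h'|->].
  by left; apply: ln_increasing.
by right.
Qed.
Lemma expK (x : R) : 0 < x -> exp (ln x) = x.
Proof. by move=> /RltP h; rewrite exp_ln. Qed.
Lemma exp0 : exp 0 = 1 :> R.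
Proof. exact: exp_0. Qed.
Lemma ln1 : ln 1 = 0 :> R.
Proof. exact: ln_1. Qed.
Lemma lnK (x : R) : ln (exp x) = x.
Proof. exact: ln_exp. Qed.
Section Dot.
Variable d : nat.
Implicit Types u v w : 'rV[R]_d.
Lemma dotDl u v w : dot (u + v) w = dot u w + dot v w.
Proof. rewrite /dot -big_split; apply: eq_bigr => k _; by rewrite mxE mulrDl. Qed.
Lemma dotZl a u w : dot (a *: u) w = a * dot u w.
Proof. rewrite /dot mulr_sumr; apply: eq_bigr => k _; by rewrite mxE mulrA. Qed.
Lemma dotNl u w : dot (- u) w = - dot u w.
Proof. rewrite /dot -sumrN; apply: eq_bigr => k _; by rewrite mxE mulNr. Qed.
Lemma dotBl u v w : dot (u - v) w = dot u w - dot v w.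
Proof. by rewrite dotDl dotNl. Qed.
Lemma dot0l w : dot 0 w = 0.
Proof. rewrite /dot big1 // => k _; by rewrite mxE mul0r. Qed.
Lemma dotC u v : dot u v = dot v u.
Proof. rewrite /dot; apply: eq_bigr => k _; by rewrite mulrC. Qed.
Lemma dot_suml (I : finType) (f : I -> 'rV[R]_d) w :
  dot (\sum_i f i) w = \sum_i dot (f i) w.
Proof.
rewrite /dot. under eq_bigr => k _ do rewrite summxE mulr_suml.
by rewrite exchange_big.
Qed.
End Dot.

Lemma gd_step (n d : nat) (x : 'I_n -> 'rV[R]_d) (eta : R) t v :
  dot (gd x eta t.+1) v = dot (gd x eta t) v +
    eta * n%:R^-1 * \sum_(i < n) (1 + exp (dot (gd x eta t) (x i)))^-1 * dot (x i) v.
Proof.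
rewrite /= dotBl dotZl /grad (@dotZl _ (n%:R^-1)) dot_suml.
rewrite -[in RHS]mulrA; congr (_ + _).
rewrite -mulrN; congr (_ * _). rewrite -mulrN -sumrN; congr (_ * _).
apply: eq_bigr => i _. rewrite /dot -sumrN mulr_sumr; apply: eq_bigr => k _; rewrite mxE; ring.
Qed.
Definition mk2 (a b : R) : 'rV[R]_2 := \row_(k < 2) (if (k : nat) == 0%N then a else b).

Arguments mk2 (a b)%_ring_scope.

Lemma dot2 (u v : 'rV[R]_2) : dot u v = u 0 0 * v 0 0 + u 0 1 * v 0 1.
Proof.
rewrite /dot big_ord_recr big_ord_recr big_ord0 /= add0r.
have -> : widen_ord (leqnSn 1) ord_max = 0 :> 'I_2 by apply: val_inj.
have -> : (ord_max : 'I_2) = 1 by apply: val_inj.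
by [].
Qed.

Lemma mk2E0 a b : mk2 a b 0 0 = a.
Proof. by rewrite mxE. Qed.
Lemma mk2E1 a b : mk2 a b 0 1 = b.
Proof. by rewrite mxE. Qed.

Lemma dot_mk2 a b c e : dot (mk2 a b) (mk2 c e) = a * c + b * e.
Proof. by rewrite dot2 !mk2E0 !mk2E1. Qed.

Definition xs (m : nat) (y0 y1 : 'rV[R]_2) : 'I_m.+1 -> 'rV[R]_2 :=
  fun i => if i == ord0 then y0 else y1.
Arguments xs {m}.

Lemma sum_xs m y0 y1 (F : 'rV[R]_2 -> R) :
  \sum_(i < m.+1) F (xs y0 y1 i) = F y0 + m%:R * F y1.
Proof.
rewrite big_ord_recl /xs eqxx; congr (_ + _).
rewrite (eq_bigr (fun _ => F y1)); last by move=> i _; rewrite eq_sym (negbTE (neq_lift _ _)).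
by rewrite sumr_const card_ord mulr_natl.
Qed.

Definition sg (z : R) : R := (1 + exp z)^-1.

Lemma opx_gt0 (z : R) : 0 < 1 + exp z.
Proof. have := exp_gt0 z; lra. Qed.

Lemma sg_gt0 z : 0 < sg z.
Proof. by rewrite /sg invr_gt0 opx_gt0. Qed.

Lemma sg_le1 z : sg z <= 1.
Proof. rewrite /sg invf_le1 ?opx_gt0 //; have := exp_gt0 z; lra. Qed.

Lemma sg_expE z : exp z * sg z = 1 - sg z.
Proof. rewrite /sg; have := opx_gt0 z => h; field; lra. Qed.

Lemma sg_mul_exp z : exp z * sg z <= 1.
Proof. rewrite sg_expE; have := sg_gt0 z; lra. Qed.

Lemma sg_le_expN z : sg z <= exp (- z).
Proof.
rewrite expN; have h := exp_gt0 z.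
rewrite -(ler_pM2l h) mulfV ?gt_eqF //; exact: sg_mul_exp.
Qed.

Lemma sg0 : sg 0 = 2^-1.
Proof. by rewrite /sg exp0. Qed.

Lemma sg_ge_half z : z <= 0 -> 2^-1 <= sg z.
Proof.
move=> hz; rewrite /sg; have h1 := exp_le hz; rewrite exp0 in h1.
rewrite lef_pV2 ?posrE ?opx_gt0 //; lra.
Qed.

Lemma ln_ge0 y : 1 <= y -> 0 <= ln y.
Proof. move=> h; rewrite -ln1; exact: ln_le. Qed.

Lemma ln_ge_sg z : sg z <= ln (1 + exp (- z)).
Proof.
rewrite -[sg z]lnK; apply: ln_le; first exact: exp_gt0.
set s := sg z; set y := exp (- z).
have h1 : 1 - s <= exp (- s) by have := exp_ge1 (- s); nrm; lra.
have hz := exp_gt0 z.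
have h2 : (1 - s) * (1 + y) = 1.
  rewrite /s /y /sg expN; nrm; field.
  by rewrite (gt_eqF hz) (gt_eqF (opx_gt0 z)).
have h3 : exp s * exp (- s) = 1.
  by rewrite -expD; nrm; rewrite subrr exp0.
have hA := exp_gt0 s.
have hy : 0 < 1 + y by exact: opx_gt0.
have h4 : 0 <= exp s * (1 + y) * (exp (- s) - (1 - s)).
  by apply: mulr_ge0; [apply: mulr_ge0; lra| lra].
nrm. nra.
Qed.

Lemma exp_le27 y : 0 <= y -> y <= 3 -> exp y <= 1 + 27 * y.
Proof.
move=> y0 y3.
have h1 : 1 - y <= exp (- y) by have := exp_ge1 (- y); nrm; lra.
have h3 : exp y * exp (- y) = 1 by rewrite -expD; nrm; rewrite subrr exp0.
have hA := exp_gt0 y.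
have e3 : exp y <= 27.
  have h : exp y <= exp 1 ^+ 3 by rewrite expRX; apply: exp_le; nrm; lra.
  have h' : exp 1 ^+ 3 <= 3 ^+ 3.
    apply: lerXn2r; rewrite ?nnegrE; [exact: ltW (exp_gt0 _)| by []| exact: exp1_le3].
  have e : 3 ^+ 3 = 27 :> R by ring.
  lra.
have h4 : 0 <= exp y * (exp (- y) - (1 - y)) by apply: mulr_ge0; lra.
nra.
Qed.

Lemma ln_le_half K : 0 < K -> ln K <= K / 2.
Proof.
move=> hK.
have h : forall k2 k4, k2 = k4 + k4 -> K = 4 * k4 -> K <= exp k2.
  move=> k2 k4 hk2 hk.
  rewrite hk2 expD.
  have h1 := exp_ge1 k4.
  have h0 : 0 <= 1 + k4 by lra.
  have : (1 + k4) * (1 + k4) <= exp k4 * exp k4.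
    by apply: ler_pM => //; lra.
  have hsq := sqr_ge0 (1 - k4).
  rewrite expr2 in hsq.
  nra.
have := h (K / 2) (K / 4); rewrite -/(K / 2) => h'.
have h2 : K <= exp (K / 2) by apply: h'; field.
rewrite -[X in _ <= X]lnK; exact: ln_le.
Qed.

Lemma exp_big y z : 160 <= y -> z = 10 * y -> 100 ^+ 6 * y ^+ 4 <= exp z.
Proof.
move=> hy ->.
have hy0 : 0 <= y by lra.
have e := expRX y 10.
have e2 : y *+ 10 = 10 * y by rewrite mulr_natl.
rewrite e2 in e; rewrite -e.
have h1 : y <= exp y by have := exp_ge1 y; lra.
have h2 : y ^+ 10 <= exp y ^+ 10.
  by apply: lerXn2r; rewrite ?nnegrE //; exact: ltW (exp_gt0 _).
apply: le_trans h2.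
have -> : y ^+ 10 = y ^+ 6 * y ^+ 4 by rewrite -exprD.
rewrite ler_pM2r ?exprn_gt0 //; last lra.
by apply: lerXn2r; rewrite ?nnegrE //; lra.
Qed.

Definition ex (x : R) : R := exp x.
Arguments ex x%_ring_scope.

Lemma ex_gt0 x : 0 < ex x. Proof. exact: exp_gt0. Qed.
Lemma exD x y : ex (x + y) = ex x * ex y. Proof. exact: expD. Qed.
Lemma ex_ge1 x : 1 + x <= ex x. Proof. exact: exp_ge1. Qed.
Lemma exN x : ex (- x) = (ex x)^-1. Proof. exact: expN. Qed.
Lemma ex_le x y : x <= y -> ex x <= ex y. Proof. exact: exp_le. Qed.
Lemma ex1_le3 : ex 1 <= 3. Proof. exact: exp1_le3. Qed.
Lemma exK x : 0 < x -> ex (ln x) = x. Proof. exact: expK. Qed.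
Lemma ex0 : ex 0 = 1. Proof. exact: exp0. Qed.
Lemma lnexK x : ln (ex x) = x. Proof. exact: lnK. Qed.
Lemma sg_le_exN z : sg z <= ex (- z). Proof. exact: sg_le_expN. Qed.
Lemma sg_mul_ex z : ex z * sg z <= 1. Proof. exact: sg_mul_exp. Qed.
Lemma ex_le27 y : 0 <= y -> y <= 3 -> ex y <= 1 + 27 * y. Proof. exact: exp_le27. Qed.
Lemma ex_big y z : 160 <= y -> z = 10 * y -> 100 ^+ 6 * y ^+ 4 <= ex z. Proof. exact: exp_big. Qed.
Lemma exB x y : ex (x - y) = ex x / ex y. Proof. by rewrite exD exN. Qed.
Arguments ex_gt0 x%_ring_scope.
Arguments exD (x y)%_ring_scope.
Arguments ex_ge1 x%_ring_scope.
Arguments exN x%_ring_scope.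
Arguments exB (x y)%_ring_scope.
Arguments sg z%_ring_scope.
Arguments sg_gt0 z%_ring_scope.
Arguments sg_le1 z%_ring_scope.
Arguments sg_le_exN z%_ring_scope.
Arguments sg_mul_ex z%_ring_scope.
Arguments opx_gt0 z%_ring_scope.
Arguments lnexK x%_ring_scope.
Lemma caseA_seq (E s c12 : R) (m : nat) (p q : nat -> R) : 0 < E -> 0 <= s -> c12 <= 0 ->
  (forall t, p t.+1 = p t + E * (sg (p t) * s + m%:R * (sg (q t) * c12))) ->
  forall k, p k.+1 <= p 1%N + k%:R * (E * s).
Proof.
move=> hE hs hc hrec; elim=> [|k IH]; first by rewrite mul0r addr0.
rewrite hrec -natr1.
have h1 : sg (p k.+1) * s <= s by rewrite ler_piMl // sg_le1.
have h2 : m%:R * (sg (q k.+1) * c12) <= 0.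
  rewrite mulr_ge0_le0 //; apply: mulr_ge0_le0 => //; exact: ltW (sg_gt0 _).
have h3 : E * (sg (p k.+1) * s + m%:R * (sg (q k.+1) * c12)) <= E * s.
  by rewrite ler_pM2l //; lra.
nra.
Qed.

Lemma caseB_seq (E K M L c Q1 dl T : R) (m : nat) (p q : nat -> R) :
  0 < E -> 0 <= K -> 1 <= M -> K <= M -> ex L = M -> 0 <= c -> E * c <= 2 * K ->
  dl = E * m%:R * c * (36 * E ^+ 2) * 9 * ex (- Q1) -> T * dl <= 1 ->
  M + 27 * K * T <= 6 * E -> 0 <= T ->
  p 1%N = L -> q 1%N = Q1 ->
  (forall t, p t.+2 = p t.+1 + K * sg (p t.+1) - E * m%:R * c * sg (q t.+1)) ->
  (forall t, q t.+1 - E * c * sg (p t.+1) <= q t.+2) ->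
  forall k, k%:R <= T -> ex (p k.+1) <= M + 27 * K * k%:R.
Proof.
move=> hE hK hM1 hKM hL hc hEc hdl hTd hMT hT0 hp1 hq1 hprec hqrec.
have hdl0 : 0 <= dl.
  rewrite hdl; apply: mulr_ge0; last exact: ltW (ex_gt0 _).
  apply: mulr_ge0 => //; apply: mulr_ge0; last by apply: mulr_ge0 => //; apply: exprn_ge0; lra.
  by apply: mulr_ge0 => //; apply: mulr_ge0 => //; lra.
have J : forall k, k%:R <= T -> exists S N, 0 <= S /\ 0 <= N /\ N <= k%:R * dl /\
   p k.+1 = L + K * S - N /\ Q1 - E * c * S <= q k.+1 /\ ex (p k.+1) <= M + 27 * K * k%:R.
  elim=> [|k IH] hk.
    exists 0, 0; do !split => //; rewrite ?mul0r ?mulr0 ?addr0 ?subr0 ?hp1 ?hq1 ?hL //.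
  have hk' : k%:R <= T by move: hk; rewrite -natr1; lra.
  have [S [N [hS [hN [hNk [hpk [hqk hek]]]]]]] := IH hk'.
  set P := p k.+1 in hpk hek *.
  have hN1 : N <= 1.
    have : k%:R * dl <= T * dl by apply: ler_wpM2r.
    lra.
  have hKS : 0 <= K * S by apply: mulr_ge0.
  have hPL : L - 1 <= P by lra.
  have hexP6 : ex P <= 6 * E.
    have : 27 * K * k%:R <= 27 * K * T by apply: ler_wpM2l => //; lra.
    lra.
  have hs0 : 0 < sg P := sg_gt0 P.
  have hsP : sg P <= ex (- P) := sg_le_exN P.
  have hM0 : 0 < M by lra.
  have hexnP : ex (- P) <= ex 1 / M.
    have h : ex (- P) <= ex (1 - L) by apply: ex_le; lra.
    by rewrite exB hL in h.
  have he1 := ex1_le3.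
  have he1p := ex_gt0 1.
  have hy3 : K * sg P <= 3.
    have h1 : K * sg P <= K * (ex 1 / M) by apply: ler_wpM2l => //; lra.
    have h2 : K * (ex 1 / M) <= ex 1.
      rewrite mulrA ler_pdivrMr // mulrC; apply: ler_wpM2l => //; exact: ltW.
    lra.
  have hy0 : 0 <= K * sg P by apply: mulr_ge0 => //; exact: ltW.
  have hexy := ex_le27 hy0 hy3.
  have hD0 : 0 <= E * m%:R * c * sg (q k.+1).
    apply: mulr_ge0; last exact: ltW (sg_gt0 _).
    apply: mulr_ge0 => //; apply: mulr_ge0 => //; lra.
  have hpk2 : p k.+2 = P + K * sg P - E * m%:R * c * sg (q k.+1) by rewrite hprec.
  have hexP0 := ex_gt0 P.
  have hexp2 : ex (p k.+2) <= ex P + 27 * K.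
    have h1 : ex (p k.+2) <= ex (P + K * sg P) by apply: ex_le; lra.
    rewrite exD in h1.
    have h2 : ex P * ex (K * sg P) <= ex P * (1 + 27 * (K * sg P)).
      by apply: ler_wpM2l => //; exact: ltW.
    have h3 := sg_mul_ex P.
    have h4 : ex P * (1 + 27 * (K * sg P)) = ex P + 27 * K * (ex P * sg P) by ring.
    have h5 : 27 * K * (ex P * sg P) <= 27 * K.
      by rewrite -[X in _ <= X]mulr1; apply: ler_wpM2l => //; lra.
    lra.
  have hQ : Q1 - 2 * (P - L + N) <= q k.+1.
    have : E * c * S <= 2 * K * S by apply: ler_wpM2r.
    lra.
  have hexq : ex (- q k.+1) <= ex (- Q1) * (ex P * ex P) * (ex (- L) * ex (- L)) * (ex 1 * ex 1).
    have h1 : ex (- q k.+1) <= ex (- Q1 + (P + P) + (- L + - L) + (1 + 1)) by apply: ex_le; lra.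
    by rewrite !exD in h1.
  have hA := ex_gt0 (- Q1).
  have hB : ex P * ex P <= 36 * E ^+ 2.
    have -> : 36 * E ^+ 2 = (6 * E) * (6 * E) by ring.
    by apply: ler_pM => //; exact: ltW.
  have hC : ex (- L) * ex (- L) <= 1.
    have hL1 : ex (- L) <= 1 by rewrite exN hL invf_le1.
    have hL0 := ex_gt0 (- L).
    rewrite -[X in _ <= X](mulr1 1).
    by apply: ler_pM => //; exact: ltW.
  have hD : ex 1 * ex 1 <= 9.
    have -> : 9 = 3 * 3 :> R by ring.
    by apply: ler_pM => //; exact: ltW.
  have hprod : ex (- Q1) * (ex P * ex P) * (ex (- L) * ex (- L)) * (ex 1 * ex 1)
      <= ex (- Q1) * (36 * E ^+ 2) * 1 * 9.
    have hB0 : 0 <= ex P * ex P by apply: mulr_ge0; exact: ltW.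
    have hC0 : 0 <= ex (- L) * ex (- L) by apply: mulr_ge0; exact: ltW (ex_gt0 _).
    have hD0' : 0 <= ex 1 * ex 1 by apply: mulr_ge0; exact: ltW.
    apply: ler_pM => //.
    - apply: mulr_ge0 => //; apply: mulr_ge0 => //; exact: ltW.
    - apply: ler_pM => //.
      + apply: mulr_ge0 => //; exact: ltW.
      + apply: ler_pM => //; exact: ltW.
  have hsq : sg (q k.+1) <= ex (- Q1) * (36 * E ^+ 2) * 9.
    have := sg_le_exN (q k.+1); lra.
  have hDt : E * m%:R * c * sg (q k.+1) <= dl.
    rewrite hdl.
    have hEmc : 0 <= E * m%:R * c by apply: mulr_ge0 => //; apply: mulr_ge0 => //; lra.
    have -> : E * m%:R * c * (36 * E ^+ 2) * 9 * ex (- Q1) = E * m%:R * c * (ex (- Q1) * (36 * E ^+ 2) * 9) by ring.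
    by apply: ler_wpM2l.
  exists (S + sg P), (N + E * m%:R * c * sg (q k.+1)).
  have hqr := hqrec k.
  rewrite -/P in hqr.
  do !split.
  - have := ltW hs0; lra.
  - lra.
  - rewrite -natr1 mulrDl mul1r; lra.
  - rewrite hpk2 hpk; ring.
  - have : E * c * (S + sg P) = E * c * S + E * c * sg P by ring.
    lra.
  - rewrite -natr1; lra.
move=> k hk; have [S [N [_ [_ [_ [_ [_ h]]]]]]] := J k hk; exact: h.
Qed.

Lemma xs_step m y0 y1 eta t v :
  dot (gd (@xs m y0 y1) eta t.+1) v =
  dot (gd (@xs m y0 y1) eta t) v + eta / m.+1%:R *
   (sg (dot (gd (@xs m y0 y1) eta t) y0) * dot y0 v +
    m%:R * (sg (dot (gd (@xs m y0 y1) eta t) y1) * dot y1 v)).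
Proof.
rewrite gd_step; congr (_ + _ * _).
exact: (sum_xs m y0 y1 (fun y => sg (dot (gd (@xs m y0 y1) eta t) y) * dot y v)).
Qed.

Lemma gd0_dot n d (x : 'I_n -> 'rV[R]_d) eta v : dot (gd x eta 0) v = 0.
Proof. exact: dot0l. Qed.

Lemma loss_ge m y0 y1 w :
  m.+1%:R^-1 * sg (dot w y0) <= loss (@xs m y0 y1) w.
Proof.
rewrite /loss.
have -> : \sum_(i < m.+1) ln (1 + exp (- dot w (@xs m y0 y1 i))) =
   ln (1 + exp (- dot w y0)) + m%:R * ln (1 + exp (- dot w y1)).
  exact: (sum_xs m y0 y1 (fun y => ln (1 + exp (- dot w y)))).
have h1 := ln_ge_sg (dot w y0).
have h2 : 0 <= ln (1 + exp (- dot w y1)).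
  apply: ln_ge0; have := exp_gt0 (- dot w y1); nrm; lra.
have h3 : 0 <= m%:R * ln (1 + exp (- dot w y1)) by apply: mulr_ge0.
rewrite ler_pM2l ?invr_gt0 ?ltr0Sn //; lra.
Qed.

Lemma vnorm_mk2 a b : a * a + b * b <= 1 -> vnorm (mk2 a b) <= 1.
Proof.
move=> h; rewrite /vnorm dot_mk2 -sqrtr1 ler_sqrt //.
Qed.

Lemma margin_xs m (g h0 h1 : R) : 0 < g -> h0 * h1 <= 0 ->
  lin_separable (@xs m.+1 (mk2 g h0) (mk2 g h1)) /\ max_margin_is (@xs m.+1 (mk2 g h0) (mk2 g h1)) g.
Proof.
move=> hg hh.
have e : forall i, dot (mk2 1 0) (@xs m.+1 (mk2 g h0) (mk2 g h1) i) = g.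
  move=> i; rewrite /xs; case: (i == ord0); rewrite dot_mk2; ring.
split; first by exists (mk2 1 0) => i; rewrite e.
split.
  exists (mk2 1 0); split; last by move=> i; rewrite e.
  by rewrite /vnorm dot_mk2 mulr1 mulr0 addr0 sqrtr1.
move=> w hw.
have hw2 : w 0 0 * w 0 0 + w 0 1 * w 0 1 = 1.
  move: hw; rewrite /vnorm dot2 => hw.
  have h0' : 0 <= w 0 0 * w 0 0 + w 0 1 * w 0 1 by nra.
  by rewrite -(sqr_sqrtr h0') hw expr1n.
have hw0 : w 0 0 <= 1 by nra.
have gen : forall hh', w 0 1 * hh' <= 0 -> dot w (mk2 g hh') <= g.
  move=> hh' hs; rewrite dot2 mk2E0 mk2E1; nra.
case: (lerP (w 0 1 * h0) 0) => hs.
  by exists ord0; rewrite /xs eqxx; apply: gen.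
exists (lift ord0 ord0); rewrite /xs eq_sym (negbTE (neq_lift _ _)); apply: gen.
have : (w 0 1 * h0) * (w 0 1 * h1) <= 0.
  have -> : (w 0 1 * h0) * (w 0 1 * h1) = (w 0 1 * w 0 1) * (h0 * h1) by ring.
  by apply: mulr_ge0_le0 => //; nra.
nra.
Qed.

Ltac nz := do ?[apply/andP; split]; apply: lt0r_neq0; lra.

Lemma IZR3 : IZR 3 = 3 :> R. Proof. by rewrite IZRposE INRE. Qed.

Lemma goal_helper (c n g T : R) : 0 < g -> c * (n * g + 1) <= T * g ^+ 2 ->
  c * (n / g + (g ^+ 2)^-1) <= T.
Proof.
move=> hg h.
have hg0 : g != 0 by rewrite gt_eqF.
have -> : n / g + (g ^+ 2)^-1 = (n * g + 1) / g ^+ 2 by field.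
by rewrite mulrA ler_pdivrMr ?exprn_gt0.
Qed.

Lemma loss_sg (m : nat) y0 y1 eta w :
  0 < eta -> loss (@xs m y0 y1) w <= (8 * eta)^-1 -> sg (dot w y0) * (8 * eta) <= m.+1%:R.
Proof.
move=> he hl.
have h := le_trans (loss_ge m y0 y1 w) hl.
have hn : 0 < m.+1%:R :> R by rewrite ltr0Sn.
have hp : 0 <= m.+1%:R * (8 * eta) by apply: mulr_ge0; lra.
have H := ler_wpM2r hp h.
have e1 : m.+1%:R^-1 * sg (dot w y0) * (m.+1%:R * (8 * eta)) = sg (dot w y0) * (8 * eta).
  have hm0 := ler0n R m; field; nz.
have e2 : (8 * eta)^-1 * (m.+1%:R * (8 * eta)) = m.+1%:R.
  have hm0 := ler0n R m; field; nz.
by rewrite e1 e2 in H.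
Qed.

Lemma caseA (g eta : R) (m : nat) : 0 < g -> g <= 6^-1 -> m.+2%:R <= eta ->
  1 <= 100 * m.+2%:R * g ->
  exists (d : nat) (x : 'I_m.+2 -> 'rV[R]_d),
    (forall i, vnorm (x i) <= 1) /\ lin_separable x /\ max_margin_is x g /\
    (forall t : nat, loss x (gd x eta t) <= (8 * eta)^-1 ->
       (30 * 100)^-1 * (m.+2%:R / g + (g ^+ 2)^-1) <= t%:R).
Proof.
move=> hg hg6 hen hc.
set y0 := mk2 g (- g); set y1 := mk2 g (4 / 5).
have hh : - g * (4 / 5) <= 0 by nra.
have [hsep hmar] := margin_xs m hg hh.
exists 2, (@xs m.+1 y0 y1).
split.
  move=> i; rewrite /xs; case: (i == ord0); apply: vnorm_mk2; nra.
split => //; split => //.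
move=> t hl.
set x := @xs m.+1 y0 y1.
pose p k := dot (gd x eta k) y0. pose q k := dot (gd x eta k) y1.
have hn0 : 0 < m.+2%:R :> R by rewrite ltr0Sn.
have heta0 : 0 < eta by lra.
pose E := eta / m.+2%:R.
have hE : 0 < E by rewrite divr_gt0.
have d00 : dot y0 y0 = 2 * g ^+ 2 by rewrite /y0 dot_mk2; ring.
have d10 : dot y1 y0 = g ^+ 2 - 4 / 5 * g by rewrite /y0 /y1 dot_mk2; ring.
have hrec : forall k, p k.+1 = p k + E * (sg (p k) * (2 * g ^+ 2) +
     m.+1%:R * (sg (q k) * (g ^+ 2 - 4 / 5 * g))).
  by move=> k; rewrite /p xs_step d00 d10.
have hs : 0 <= 2 * g ^+ 2 by nra.
have hc12 : g ^+ 2 - 4 / 5 * g <= 0 by nra.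
have hA := caseA_seq hE hs hc12 hrec.
have hp0 : p 0%N = 0 by exact: dot0l.
have hq0 : q 0%N = 0 by exact: dot0l.
have hp1 : p 1%N = E / 2 * (2 * g ^+ 2 + m.+1%:R * (g ^+ 2 - 4 / 5 * g)).
  by rewrite hrec hp0 hq0 sg0; ring.
have hsg := loss_sg heta0 hl; rewrite -/(p t) in hsg.
have hpos : 0 < p t.
  rewrite ltNge; apply/negP => hle.
  have := sg_ge_half hle; nra.
case: t hl hsg hpos => [|k] hl hsg hpos; first by rewrite hp0 in hpos; lra.
have hk := hA k; rewrite hp1 in hk.
apply: goal_helper => //.
have hm1 : 1 <= m.+1%:R :> R by rewrite ler1n.
have hk0 : 0 <= k%:R :> R by exact: ler0n.
have hnm : m.+2%:R = m.+1%:R + 1 :> R by rewrite -natr1.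
have hks : k.+1%:R = k%:R + 1 :> R by rewrite -natr1.
rewrite hks.
set M1 := m.+1%:R in hm1 hk hnm *.
set kk := k%:R in hk0 hk *.
have h1 : 0 < E / 2 * (2 * g ^+ 2 + M1 * (g ^+ 2 - 4 / 5 * g)) + kk * (E * (2 * g ^+ 2)) by lra.
have h2 : 0 < g * (2 * g + M1 * (g - 4 / 5) + 4 * kk * g).
  have -> : g * (2 * g + M1 * (g - 4 / 5) + 4 * kk * g) =
     (E / 2 * (2 * g ^+ 2 + M1 * (g ^+ 2 - 4 / 5 * g)) + kk * (E * (2 * g ^+ 2))) * (2 / E).
    by field; nz.
  by apply: mulr_gt0 => //; rewrite divr_gt0.
have h3 : 0 < 2 * g + M1 * (g - 4 / 5) + 4 * kk * g by rewrite (pmulr_rgt0 _ hg) in h2.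
have h4 : 3 / 40 * M1 <= kk * g by nra.
rewrite hnm in hc *.
have h5 : (M1 + 1) * g + 1 <= 101 * ((M1 + 1) * g) by lra.
have h6 : (30 * 100)^-1 * ((M1 + 1) * g + 1) <= (30 * 100)^-1 * (101 * ((M1 + 1) * g)).
  by apply: ler_wpM2l => //; rewrite invr_ge0; lra.
have h7 : kk * g * g <= (kk + 1) * g ^+ 2 by nra.
nra.
Qed.

Lemma B_E (g eta n : R) : 0 < g -> g <= 6^-1 -> 0 < n -> n <= eta -> 64 / g ^+ 2 <= eta ->
  100 * n * g < 1 -> 384 * 100 <= eta / n /\ n <= eta / n.
Proof.
move=> hg hg6 hn hen he64 hc.
have heta0 : 0 < eta by lra.
have hg2 : 0 < g ^+ 2 by rewrite exprn_gt0.
have h64 : 64 <= eta * g ^+ 2 by move: he64; rewrite ler_pdivrMr.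
have hEn : eta / n * n = eta by field; nz.
move: hEn; set E := eta / n => hEn.
have hE0 : 0 < E by rewrite /E divr_gt0.
clearbody E.
have hEg : 64 * 100 <= E * g.
  have e : E * g * (100 * n * g) = 100 * (eta * g ^+ 2) by rewrite -hEn; ring.
  have hEg0 : 0 < E * g by apply: mulr_gt0.
  have h1 : E * g * (100 * n * g) < E * g by rewrite -[X in _ < X]mulr1 ltr_pM2l.
  lra.
split.
  have : E * g <= E / 6 by rewrite ler_pM2l.
  lra.
have h1 : 0 <= E * (1 - 100 * n * g) by apply: mulr_ge0; lra.
have h2 : 0 <= n * (E * g - 64 * 100) by apply: mulr_ge0; lra.
nra.
Qed.

Lemma B_b (g E a b L s1 mm : R) : 0 < g -> g <= 6^-1 -> 0 < E -> 1 <= mm ->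
  a = 3 * g ^+ 2 -> s1 = g ^+ 2 + a ^+ 2 -> 0 <= L -> 2 * L <= E * s1 ->
  mm * (a * b) = (mm + 1) * g ^+ 2 + a ^+ 2 - 2 * L / E -> 3^-1 <= b /\ b <= 3 / 4.
Proof.
move=> hg hg6 hE hmm ha hs1 hL h2L hb.
have hg2 : 0 < g ^+ 2 by rewrite exprn_gt0.
have hgg : g ^+ 2 <= 36^-1 by rewrite expr2; nra.
have ha0 : 0 < a by lra.
have hma0 : 0 < mm * a by apply: mulr_gt0; lra.
have hLE : 2 * L / E <= s1 by rewrite ler_pdivrMr // [s1 * E]mulrC.
have hLE0 : 0 <= 2 * L / E by apply: divr_ge0; lra.
have ha2 : a ^+ 2 <= g ^+ 2 / 4.
  have -> : a ^+ 2 = g ^+ 2 * (9 * g ^+ 2) by rewrite ha; ring.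
  have : 9 * g ^+ 2 <= 4^-1 by lra.
  move=> h; rewrite -[X in _ <= X]mulr1 -mulrA; apply: ler_wpM2l; lra.
have hmg : 0 <= (mm - 1) * g ^+ 2 by apply: mulr_ge0; lra.
split.
  have : mm * a * 3^-1 <= mm * a * b.
    rewrite -[mm * a * b]mulrA hb.
    have -> : mm * a * 3^-1 = mm * g ^+ 2 by rewrite ha; field.
    lra.
  by rewrite ler_pM2l.
have : mm * a * b <= mm * a * (3 / 4).
  rewrite -[mm * a * b]mulrA hb.
  have -> : mm * a * (3 / 4) = mm * g ^+ 2 * (9 / 4) by rewrite ha; field.
  lra.
by rewrite ler_pM2l.
Qed.

Lemma B_Q1 (g E a b mm : R) : 0 < E -> 3^-1 <= b -> b <= 3 / 4 -> 0 < a -> a <= 12^-1 -> 1 <= mm ->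
  E / 24 <= E * (2^-1 * (g ^+ 2 - a * b) + mm * (2^-1 * (g ^+ 2 + b ^+ 2))).
Proof.
move=> hE hb1 hb2 ha0 ha hmm.
have h1 : 1 / 12 <= b * (b - a) by nra.
have hg := sqr_ge0 g.
have h2 : 0 <= (mm - 1) * (g ^+ 2 + b ^+ 2) by apply: mulr_ge0; have := sqr_ge0 b; lra.
have h3 : 1 / 12 <= g ^+ 2 - a * b + mm * (g ^+ 2 + b ^+ 2).
  rewrite !expr2 in h2 hg *; nra.
have -> : E * (2^-1 * (g ^+ 2 - a * b) + mm * (2^-1 * (g ^+ 2 + b ^+ 2))) =
    E / 2 * (g ^+ 2 - a * b + mm * (g ^+ 2 + b ^+ 2)) by ring.
have : E / 2 * (1 / 12) <= E / 2 * (g ^+ 2 - a * b + mm * (g ^+ 2 + b ^+ 2)).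
  by apply: ler_wpM2l => //; lra.
lra.
Qed.

Lemma B_Td (g E c T Q1 mm : R) : 384 * 100 <= E -> 0 <= mm -> mm <= E -> 0 <= c ->
  c <= g ^+ 2 * (9 / 4) -> 0 <= T -> T * g ^+ 2 = 7^-1 -> E / 24 <= Q1 ->
  T * (E * mm * c * (36 * E ^+ 2) * 9 * ex (- Q1)) <= 1.
Proof.
move=> hE hmm0 hmm hc0 hc hT0 hTg hQ.
have hE0 : 0 < E by lra.
have hW0 := ex_gt0 (- Q1).
have hW : 105 * E ^+ 4 * ex (- Q1) <= 1.
  have hX0 := ex_gt0 (E / 24).
  have h1 : ex (- Q1) <= (ex (E / 24))^-1 by rewrite -exN; apply: ex_le; lra.
  have h2 : 100 ^+ 6 * (E / 240) ^+ 4 <= ex (E / 24).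
    by apply: ex_big; [lra| field].
  have h3 : 105 * E ^+ 4 <= ex (E / 24).
    have -> : E ^+ 4 = 240 ^+ 4 * (E / 240) ^+ 4 by rewrite -exprMn; congr (_ ^+ _); field.
    have := exprn_ge0 4 (ltW (divr_gt0 hE0 (ltr0Sn R 239))).
    lra.
  have h4 : 0 <= 105 * E ^+ 4 by apply: mulr_ge0; [lra| apply: exprn_ge0; lra].
  have h := ler_pM h4 (ltW hW0) h3 h1.
  have hne := lt0r_neq0 hX0.
  by rewrite mulfV in h.
have hcT : c * T <= 9 / 28.
  have : c * T <= g ^+ 2 * (9 / 4) * T by apply: ler_wpM2r.
  have -> : g ^+ 2 * (9 / 4) * T = (T * g ^+ 2) * (9 / 4) by ring.
  rewrite hTg.
  by have -> : 7^-1 * (9 / 4) = 9 / 28 :> R by field.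
have hX : 0 <= E * 36 * E ^+ 2 * 9 * ex (- Q1).
  apply: mulr_ge0; last exact: ltW.
  apply: mulr_ge0; last lra.
  apply: mulr_ge0; last by apply: exprn_ge0; lra.
  lra.
have -> : T * (E * mm * c * (36 * E ^+ 2) * 9 * ex (- Q1)) =
  (c * T) * (mm * (E * 36 * E ^+ 2 * 9 * ex (- Q1))) by ring.
have h5 : (c * T) * (mm * (E * 36 * E ^+ 2 * 9 * ex (- Q1))) <=
   (9 / 28) * (E * (E * 36 * E ^+ 2 * 9 * ex (- Q1))).
  apply: ler_pM => //; first by apply: mulr_ge0.
    by apply: mulr_ge0.
  by apply: ler_wpM2r.
have e : (9 / 28) * (E * (E * 36 * E ^+ 2 * 9 * ex (- Q1))) = (9 / 28 * 324) * (E ^+ 4 * ex (- Q1)).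
  by ring.
rewrite e in h5.
have h6 : 0 <= E ^+ 4 * ex (- Q1) by apply: mulr_ge0; [apply: exprn_ge0; lra| exact: ltW].
lra.
Qed.

Lemma B_final (g E M K T kk eta n : R) : 0 < g -> 0 < n -> eta = E * n -> 384 * 100 <= E ->
  100 * n * g < 1 -> T * g ^+ 2 = 7^-1 -> M + 27 * K * T <= 6 * E -> 0 <= K ->
  (kk <= T -> False) ->
  (30 * 100)^-1 * (n / g + (g ^+ 2)^-1) <= kk + 1.
Proof.
move=> hg hn heta hE hc hTg hMT hK hk.
have hkT : T < kk by rewrite ltNge; apply/negP.
apply: goal_helper => //.
have hg2 : 0 < g ^+ 2 by rewrite exprn_gt0.
have h1 : T * g ^+ 2 <= kk * g ^+ 2 by apply: ler_wpM2r; lra.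
have h2 : 0 <= g ^+ 2 by lra.
lra.
Qed.

Lemma B_t0 (E n eta : R) : 0 < n -> eta = E * n -> 384 * 100 <= E -> 
  sg 0 * (8 * eta) <= n -> False.
Proof.
move=> hn he hE; rewrite sg0 he => h.
have : 4 * E * n <= 1 * n by lra.
rewrite ler_pM2r //; lra.
Qed.

Lemma B_key (E n eta z : R) : 0 < n -> eta = E * n -> sg z * (8 * eta) <= n -> 8 * E <= 1 + ex z.
Proof.
move=> hn he h.
have hp : 0 < 1 + ex z by have := ex_gt0 z; lra.
have e : sg z * (1 + ex z) = 1 by rewrite /sg -/(ex z); field; nz.
have h2 : sg z * (8 * eta) * (1 + ex z) <= n * (1 + ex z) by apply: ler_wpM2r; lra.
have e2 : sg z * (8 * eta) * (1 + ex z) = 8 * eta by rewrite mulrAC e mul1r.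
rewrite e2 he in h2.
have : 8 * E * n <= (1 + ex z) * n by lra.
rewrite ler_pM2r //.
Qed.

Lemma B_c (g a b c : R) : a = 3 * g ^+ 2 -> 0 < a -> 3^-1 <= b -> b <= 3 / 4 ->
  c = a * b - g ^+ 2 -> [/\ 0 <= c, c <= g ^+ 2 * (9 / 4) & c <= 2 * (g ^+ 2 + a ^+ 2)].
Proof.
move=> ha ha0 hb1 hb2 hc.
have h1 : a * 3^-1 <= a * b by apply: ler_wpM2l; lra.
have h2 : a * b <= a * (3 / 4) by apply: ler_wpM2l; lra.
have h3 := sqr_ge0 a.
split; rewrite hc; rewrite ha in h1 h2 h3 *; lra.
Qed.

Lemma B_MT (g E K M T s1 : R) : 384 * 100 <= E -> M = Num.max 1 K -> K = E * s1 -> 0 < s1 ->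
  s1 <= g ^+ 2 * (5 / 4) -> g ^+ 2 <= 36^-1 -> 0 <= T -> T * g ^+ 2 = 7^-1 ->
  M + 27 * K * T <= 6 * E.
Proof.
move=> hE hM hK hs0 hs1 hgg hT0 hTg.
have hME : M <= E.
  rewrite hM ge_max; apply/andP; split; first lra.
  rewrite hK -[X in _ <= X]mulr1; apply: ler_wpM2l; lra.
have hs1T : s1 * T <= 5 / 28.
  have : s1 * T <= g ^+ 2 * (5 / 4) * T by apply: ler_wpM2r.
  have -> : g ^+ 2 * (5 / 4) * T = (T * g ^+ 2) * (5 / 4) by ring.
  rewrite hTg.
  by have -> : 7^-1 * (5 / 4) = 5 / 28 :> R by field.
have : K * T <= E * (5 / 28) by rewrite hK -mulrA; apply: ler_wpM2l; lra.
lra.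
Qed.

Lemma B_contra (E X M K kk T : R) : 8 * E <= 1 + X -> X <= M + 27 * K * kk -> kk <= T -> 0 <= K ->
  M + 27 * K * T <= 6 * E -> 384 * 100 <= E -> False.
Proof.
move=> h1 h2 h3 h4 h5 h6.
have : 27 * K * kk <= 27 * K * T by apply: ler_wpM2l => //; lra.
lra.
Qed.


Lemma caseB (g eta : R) (m : nat) : 0 < g -> g <= 6^-1 -> m.+2%:R <= eta ->
  64 / g ^+ 2 <= eta -> 100 * m.+2%:R * g < 1 ->
  exists (d : nat) (x : 'I_m.+2 -> 'rV[R]_d),
    (forall i, vnorm (x i) <= 1) /\ lin_separable x /\ max_margin_is x g /\
    (forall t : nat, loss x (gd x eta t) <= (8 * eta)^-1 ->
       (30 * 100)^-1 * (m.+2%:R / g + (g ^+ 2)^-1) <= t%:R).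
Proof.
move=> hg hg6 hen he64 hc.
have hn0 : 0 < m.+2%:R :> R by rewrite ltr0Sn.
have heta0 : 0 < eta by apply: lt_le_trans hen.
have [hE38 hnE] := B_E hg hg6 hn0 hen he64 hc.
have hm1E : m.+2%:R = m.+1%:R + 1 :> R by rewrite -natr1.
have hm1 : 1 <= m.+1%:R :> R by rewrite ler1n.
pose E := eta / m.+2%:R.
have hE38E : 384 * 100 <= E := hE38.
have hnEE : m.+2%:R <= E := hnE.
have hEeta : eta = E * m.+2%:R by rewrite /E; field; nz.
have hE0 : 0 < E by rewrite /E divr_gt0 //; lra.
have hgg : g ^+ 2 <= 36^-1 by rewrite expr2; nra.
have hg2 : 0 < g ^+ 2 by rewrite exprn_gt0.
pose a := 3 * g ^+ 2.
have hadef : a = 3 * g ^+ 2 by [].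
have ha0 : 0 < a by rewrite /a; lra.
have ha12 : a <= 12^-1 by rewrite /a; lra.
pose s1 := g ^+ 2 + a ^+ 2.
have hs1def : s1 = g ^+ 2 + a ^+ 2 by [].
have hs1 : s1 <= g ^+ 2 * (5 / 4).
  have : a ^+ 2 <= g ^+ 2 / 4.
    have -> : a ^+ 2 = g ^+ 2 * (9 * g ^+ 2) by rewrite /a; ring.
    have : 9 * g ^+ 2 <= 4^-1 by lra.
    move=> h; rewrite -[X in _ <= X]mulr1 -mulrA; apply: ler_wpM2l; lra.
  rewrite /s1; lra.
have hs10 : 0 < s1 by rewrite /s1; have := sqr_ge0 a; lra.
clearbody s1.
pose K := E * s1.
have hK0 : 0 <= K by apply: mulr_ge0; lra.
pose M := Num.max 1 K.
have hMdef : M = Num.max 1 K by [].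
have hM1 : 1 <= M by rewrite /M le_max lexx.
have hKM : K <= M by rewrite /M le_max lexx orbT.
pose L := ln M.
have hLdef : L = ln M by [].
have hLM : ex L = M by rewrite /L exK //; lra.
have hL0 : 0 <= L by rewrite hLdef; apply: ln_ge0.
clearbody L M.
have h2L : 2 * L <= E * s1.
  case: (lerP K 1) => hK.
    rewrite hLdef hMdef max_l // ln1.
    have hKe : K = E * s1 by [].
    lra.
  have hK1 : 1 <= K by apply: ltW.
  rewrite hLdef hMdef (max_r hK1).
  have hKp : 0 < K by apply: lt_trans hK; exact: ltr01.
  have h := ln_le_half hKp.
  have hKe : K = E * s1 by [].
  lra.
pose b := (m.+2%:R * g ^+ 2 + a ^+ 2 - 2 * L / E) / (m.+1%:R * a).
have hma0 : 0 < m.+1%:R * a by apply: mulr_gt0; lra.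
have hb_def : m.+1%:R * (a * b) = m.+2%:R * g ^+ 2 + a ^+ 2 - 2 * L / E.
  by rewrite mulrA /b mulrC divfK //; apply: lt0r_neq0.
clearbody b.
have [hb13 hb34] : 3^-1 <= b /\ b <= 3 / 4.
  apply: (B_b (E := E) (L := L) (s1 := s1) (mm := m.+1%:R) hg hg6 hE0 hm1 hadef hs1def hL0 h2L).
  by rewrite hb_def hm1E.
set y0 := mk2 g a; set y1 := mk2 g (- b).
have hh : a * (- b) <= 0.
  rewrite mulrN oppr_le0; apply: mulr_ge0; [exact: ltW| lra].
have [hsep hmar] := margin_xs m hg hh.
exists 2, (@xs m.+1 y0 y1).
split.
  move=> i; rewrite /xs; case: (i == ord0); apply: vnorm_mk2.
    have : a * a <= 12^-1 * 12^-1 by apply: ler_pM; lra.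
    rewrite expr2 in hgg; lra.
  rewrite mulrNN.
  have : b * b <= 3 / 4 * (3 / 4) by apply: ler_pM; lra.
  rewrite expr2 in hgg; lra.
split => //; split => //.
move=> t hl.
set x := @xs m.+1 y0 y1.
pose p k := dot (gd x eta k) y0. pose q k := dot (gd x eta k) y1.
have d00 : dot y0 y0 = s1 by rewrite /y0 dot_mk2 hs1def !expr2.
have d10 : dot y1 y0 = g ^+ 2 - a * b by rewrite /y0 /y1 dot_mk2; ring.
have d01 : dot y0 y1 = g ^+ 2 - a * b by rewrite /y0 /y1 dot_mk2; ring.
have d11 : dot y1 y1 = g ^+ 2 + b ^+ 2 by rewrite /y1 dot_mk2; ring.
have hrecp : forall k, p k.+1 = p k + E * (sg (p k) * s1 + m.+1%:R * (sg (q k) * (g ^+ 2 - a * b))).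
  by move=> k; rewrite /p xs_step d00 d10.
have hrecq : forall k, q k.+1 = q k + E * (sg (p k) * (g ^+ 2 - a * b) + m.+1%:R * (sg (q k) * (g ^+ 2 + b ^+ 2))).
  by move=> k; rewrite /q xs_step d01 d11.
clearbody E.
have hp0 : p 0%N = 0 by exact: dot0l.
have hq0 : q 0%N = 0 by exact: dot0l.
pose c := a * b - g ^+ 2.
have hcdef : c = a * b - g ^+ 2 by [].
clearbody c.
have [hc0 hcab hc2] := B_c hadef ha0 hb13 hb34 hcdef.
have hEc : E * c <= 2 * K.
  have hKe : K = E * s1 by [].
  rewrite hKe mulrCA; apply: ler_wpM2l; first exact: ltW.
  by rewrite hs1def.
have hpr : forall t, p t.+2 = p t.+1 + K * sg (p t.+1) - E * m.+1%:R * c * sg (q t.+1).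
  by move=> k; rewrite hrecp /K hcdef; ring.
have hqr : forall t, q t.+1 - E * c * sg (p t.+1) <= q t.+2.
  move=> k; rewrite [q k.+2]hrecq hcdef.
  have : 0 <= E * (m.+1%:R * (sg (q k.+1) * (g ^+ 2 + b ^+ 2))).
    apply: mulr_ge0; first exact: ltW.
    apply: mulr_ge0; first exact: ler0n.
    apply: mulr_ge0; first exact: ltW (sg_gt0 _).
    by apply: addr_ge0; apply: sqr_ge0.
  move=> h.
  have -> : q k.+1 + E * (sg (p k.+1) * (g ^+ 2 - a * b) + m.+1%:R * (sg (q k.+1) * (g ^+ 2 + b ^+ 2))) =
    q k.+1 - E * (a * b - g ^+ 2) * sg (p k.+1) + E * (m.+1%:R * (sg (q k.+1) * (g ^+ 2 + b ^+ 2))) by ring.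
  by rewrite lerDl.
have hp1 : p 1%N = L.
  rewrite hrecp hp0 hq0 sg0.
  have -> : m.+1%:R * (2^-1 * (g ^+ 2 - a * b)) = 2^-1 * (m.+1%:R * g ^+ 2) - 2^-1 * (m.+1%:R * (a * b)) by ring.
  rewrite hb_def hs1def hm1E; field; nz.
pose Q1 := q 1%N.
have hq1 : q 1%N = Q1 by [].
have hQ1 : E / 24 <= Q1.
  rewrite /Q1 hrecq hp0 hq0 sg0 add0r.
  exact: B_Q1.
clearbody Q1.
pose T := (7 * g ^+ 2)^-1.
have hT0 : 0 <= T by rewrite /T invr_ge0; lra.
have hTg : T * g ^+ 2 = 7^-1 by rewrite /T; field; nz.
clearbody T.
pose dl := E * m.+1%:R * c * (36 * E ^+ 2) * 9 * ex (- Q1).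
have hdl : dl = E * m.+1%:R * c * (36 * E ^+ 2) * 9 * ex (- Q1) by [].
have hm1' : m.+1%:R <= E by apply: le_trans hnEE; rewrite ler_nat.
have hTd : T * dl <= 1 by rewrite hdl; exact: (B_Td hE38E (ler0n _ _) hm1' hc0 hcab hT0 hTg hQ1).
clearbody dl.
have hMT : M + 27 * K * T <= 6 * E by apply: (B_MT (s1 := s1) hE38E hMdef _ hs10 hs1 hgg hT0 hTg).
have hB := caseB_seq hE0 hK0 hM1 hKM hLM hc0 hEc hdl hTd hMT hT0 hp1 hq1 hpr hqr.
have hsg := loss_sg heta0 hl.
rewrite -/(p t) in hsg.
have hkey := B_key hn0 hEeta hsg.
case: t hl hsg hkey => [|k] hl hsg hkey.
  by exfalso; rewrite hp0 in hsg; exact: (B_t0 hn0 hEeta hE38E hsg).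
rewrite -[k.+1%:R]natr1.
apply: (B_final (M := M) (K := K) hg hn0 hEeta hE38E hc hTg hMT hK0) => hkT.
exact: (B_contra hkey (hB k hkT) hkT hK0 hMT hE38E).
Qed.

Theorem theorem10 :
  exists c : R, 0 < c /\
  forall (g : R) (n : nat) (eta : R),
    0 < g -> g <= 6^-1 -> (2 <= n)%N ->
    Num.max (n%:R) (32 / g ^+ 2 * ln (3 / g)) <= eta ->
    exists (d : nat) (x : 'I_n -> 'rV[R]_d),
      (forall i, vnorm (x i) <= 1) /\
      lin_separable x /\
      max_margin_is x g /\
      (* tau := min{t : F(w_t) <= 1/(8 eta)} >= c (n/g + 1/g^2) *)
      (forall t : nat, loss x (gd x eta t) <= (8 * eta)^-1 ->
         c * (n%:R / g + (g ^+ 2)^-1) <= t%:R).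
Proof.
exists (30 * 100)^-1; split; first by rewrite invr_gt0; lra.
move=> g n eta hg hg6 hn.
rewrite ge_max => /andP [hen hel].
case: n hn hen hel => [|[|m]] // _ hen hel.
have hln : 2 <= ln (3 / g).
  apply: le_trans (_ : 2 <= ln (ex (1 + 1))) _.
    by rewrite lnexK; lra.
  apply: ln_le; first exact: ex_gt0.
  rewrite RdivE IZR3.
  have h1 : ex (1 + 1) <= 9.
    rewrite exD.
    have h := ex1_le3; have h0 := ex_gt0 1.
    have : ex 1 * ex 1 <= 3 * 3 by apply: ler_pM; lra.
    lra.
  have : 18 <= 3 / g.
    rewrite ler_pdivlMr //; lra.
  lra.
have he64 : 64 / g ^+ 2 <= eta.
  apply: le_trans hel.
  have hg2 : 0 < g ^+ 2 by rewrite exprn_gt0.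
  have -> : 64 / g ^+ 2 = 32 / g ^+ 2 * 2 by field; apply: lt0r_neq0.
  apply: ler_wpM2l => //; apply: divr_ge0; lra.
case: (lerP 1 (100 * m.+2%:R * g)) => hc.
  exact: caseA.
exact: caseB.
Qed.
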